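(* For every integer $n\geq 2$, the set $\bigcup_{|\lambda|<1}\ker(W_n^{*}-\lambda I)$ spans a dense subspace of $H^2$.
   Context: $H^2$ denotes the Hardy space of analytic functions $f(z)=\sum_{k\ge0}\hat f(k)z^k$ on the open unit disk with $\sum_{k}|\hat f(k)|^2<\infty$. For $n\in\mathbb{N}$, $W_n$ is the bounded operator on $H^2$ given by $W_nf(z)=(1+z+\cdots+z^{n-1})f(z^n)$, and $W_n^{*}$ is its adjoint; $I$ is the identity and $\lambda$ ranges over complex numbers. *)

(* Defs.v *)
(* H^2 is represented by Taylor-coefficient
   sequences a : nat -> C (f(z) = sum_k a k z^k). *)
From Stdlib Require Import Reals Lra Lia List.
From Coquelicot Require Import Coquelicot.
Open Scope R_scope.

Definition H2 (a : nat -> C) : Prop := ex_series (fun k => (Cmod (a k)) ^ 2).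

Definition inner (a b : nat -> C) : C :=
  (Series (fun k => Re (Cmult (a k) (Cconj (b k)))),
   Series (fun k => Im (Cmult (a k) (Cconj (b k))))).

Definition norm2 (a : nat -> C) : R := Series (fun k => (Cmod (a k)) ^ 2).

(* coefficients of f(z^n) *)
Definition subst_pow (n : nat) (a : nat -> C) (m : nat) : C :=
  if Nat.eqb (m mod n)%nat 0 then a (m / n)%nat else RtoC 0.

(* coefficients of (1 + z + ... + z^(n-1)) * g(z)  (Cauchy product) *)
Definition mul_geom (n : nat) (c : nat -> C) (m : nat) : C :=
  fold_right (fun j acc => if Nat.leb j m then Cplus (c (m - j)%nat) acc else acc)
             (RtoC 0) (seq 0 n).

Definition W (n : nat) (a : nat -> C) : nat -> C := mul_geom n (subst_pow n a).

(* g \in ker (W_n^* - lam I): g in H^2 and W_n^* g = lam g, i.e.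
   <W_n f, g> = <f, lam g> for every f in H^2 (definition of the adjoint). *)
Definition in_ker_adj_sub (n : nat) (lam : C) (g : nat -> C) : Prop :=
  H2 g /\ forall f, H2 f -> inner (W n f) g = inner f (fun k => Cmult lam (g k)).

Definition lincomb (l : list (C * (nat -> C))) (k : nat) : C :=
  fold_right (fun p acc => Cplus (Cmult (fst p) (snd p k)) acc) (RtoC 0) l.

(* Main.v *)
Require Import Defs.
From Stdlib Require Import Reals Lra Lia List Psatz FunctionalExtensionality.
From Coquelicot Require Import Coquelicot.
Open Scope R_scope.


Fixpoint psum (a : nat -> R) (N : nat) : R :=
  match N with O => 0 | S k => psum a k + a k end.

Lemma psum_sf a N : psum a (S N) = sum_f_R0 a N.
Proof. induction N; simpl in *; [lra|]. rewrite <- IHN. simpl. lra. Qed.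

Lemma psum_ext a b N : (forall i, (i < N)%nat -> a i = b i) -> psum a N = psum b N.
Proof. induction N; simpl; intros H; [lra|]. rewrite IHN by (intros; apply H; lia). rewrite H by lia. lra. Qed.

Lemma psum_le a b N : (forall i, (i < N)%nat -> a i <= b i) -> psum a N <= psum b N.
Proof. induction N; simpl; intros H; [lra|]. specialize (IHN ltac:(intros; apply H; lia)). specialize (H N ltac:(lia)). lra. Qed.

Lemma psum_nonneg a N : (forall i, 0 <= a i) -> 0 <= psum a N.
Proof. intros H. induction N; simpl; [lra|]. specialize (H N). lra. Qed.

Lemma psum_mono a N M : (forall i, 0 <= a i) -> (N <= M)%nat -> psum a N <= psum a M.
Proof. intros H HNM. induction HNM; [lra|]. simpl. specialize (H m). lra. Qed.

Lemma psum_lin a b al be N : psum (fun k => al * a k + be * b k) N = al * psum a N + be * psum b N.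
Proof. induction N; simpl; [lra|]. rewrite IHN. lra. Qed.

Lemma psum_split a p q : psum a (p + q) = psum a p + psum (fun i => a (p + i)%nat) q.
Proof. induction q; simpl. rewrite Nat.add_0_r; lra. rewrite Nat.add_succ_r. simpl. rewrite IHq. lra. Qed.

Lemma psum_block n a K : psum a (n * K) = psum (fun k => psum (fun i => a (n * k + i)%nat) n) K.
Proof. induction K; simpl. rewrite Nat.mul_0_r; reflexivity.
  replace (n * S K)%nat with (n * K + n)%nat by lia. rewrite psum_split, IHK. reflexivity. Qed.

Lemma psum_one a j N : (forall i, i <> j -> a i = 0) -> psum a N = if (j <? N)%nat then a j else 0.
Proof. intros H. induction N; simpl; [reflexivity|]. rewrite IHN.
  destruct (Nat.ltb_spec j N); destruct (Nat.ltb_spec j (S N)); try lia.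
  - rewrite (H N) by lia. lra.
  - assert (j = N) by lia. subst. lra.
  - rewrite (H N) by lia. lra. Qed.

Lemma psum_const c N : psum (fun _ => c) N = INR N * c.
Proof. induction N; [simpl; lra|]. rewrite S_INR. simpl. rewrite IHN. lra. Qed.

Lemma nb_R (a : nat -> R) B : (forall i, 0 <= a i) -> (forall M, psum a M <= B) ->
  ex_series a /\ Series a <= B.
Proof.
  intros Hp HB.
  assert (Hg : Un_growing (sum_f_R0 a)).
  { intro k. simpl. specialize (Hp (S k)). lra. }
  assert (Hb : bound (EUn (sum_f_R0 a))).
  { exists B. intros x [k ->]. rewrite <- psum_sf. apply HB. }
  destruct (growing_cv _ Hg Hb) as [l Hl].
  assert (Hs : is_series a l) by (apply is_series_Reals; exact Hl).
  split. exists l; exact Hs.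
  rewrite (is_series_unique _ _ Hs).
  destruct (Rle_dec l B) as [h|h]; [exact h|exfalso].
  destruct (Hl (l - B)) as [N HN]; [lra|].
  specialize (HN N (le_n _)). unfold R_dist in HN.
  specialize (HB (S N)). rewrite psum_sf in HB.
  apply Rabs_def2 in HN. lra.
Qed.

Lemma ps_le_R (a : nat -> R) M : (forall i, 0 <= a i) -> ex_series a -> psum a M <= Series a.
Proof.
  intros Hp He. pose proof (Series_correct _ He) as Hs.
  apply is_series_Reals in Hs.
  assert (Hg : Un_growing (sum_f_R0 a)).
  { intro k. simpl. specialize (Hp (S k)). lra. }
  pose proof (growing_ineq _ _ Hg Hs) as Hi.
  destruct M. simpl. specialize (Hi 0%nat). simpl in Hi. specialize (Hp 0%nat). lra.
  rewrite psum_sf. apply Hi.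
Qed.

Definition sq (a : nat -> C) : nat -> R := fun k => Cmod (a k) ^ 2.

Lemma sq_nonneg a i : 0 <= sq a i.
Proof. unfold sq. apply pow2_ge_0. Qed.

Lemma nb a B : (forall M, psum (sq a) M <= B) -> H2 a /\ norm2 a <= B.
Proof. intros. apply nb_R; auto. apply sq_nonneg. Qed.

Lemma ps_le a M : H2 a -> psum (sq a) M <= norm2 a.
Proof. intros. apply ps_le_R; auto. apply sq_nonneg. Qed.

Lemma norm2_nonneg a : H2 a -> 0 <= norm2 a.
Proof. intros H. pose proof (ps_le a 0 H). simpl in H0. lra. Qed.

Lemma Cmod2 z : Cmod z ^ 2 = fst z ^ 2 + snd z ^ 2.
Proof. unfold Cmod. rewrite pow2_sqrt; [reflexivity|]. nra. Qed.

Lemma cmp2 a b c al be : H2 a -> H2 b -> 0 <= al -> 0 <= be ->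
  (forall k, sq c k <= al * sq a k + be * sq b k) ->
  H2 c /\ norm2 c <= al * norm2 a + be * norm2 b.
Proof.
  intros Ha Hb Hal Hbe H. apply nb. intros M.
  eapply Rle_trans. apply psum_le. intros i _. apply H.
  rewrite psum_lin. pose proof (ps_le a M Ha). pose proof (ps_le b M Hb). nra.
Qed.

Lemma sq_add_le x y : Cmod (Cplus x y) ^ 2 <= 2 * Cmod x ^ 2 + 2 * Cmod y ^ 2.
Proof. rewrite !Cmod2. destruct x as [x1 x2], y as [y1 y2]. simpl. pose proof (pow2_ge_0 (x1 - y1)). pose proof (pow2_ge_0 (x2 - y2)). simpl in *. lra. Qed.

Lemma psum_scal c a N : psum (fun k => c * a k) N = c * psum a N.
Proof. induction N; simpl; [lra|]. rewrite IHN. lra. Qed.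

Ltac ceq := apply injective_projections; simpl; try ring.

Fixpoint fsumC (F : nat -> C) (N : nat) : C :=
  match N with O => RtoC 0 | S k => Cplus (fsumC F k) (F k) end.

Lemma fsumC_ext F G N : (forall i, (i < N)%nat -> F i = G i) -> fsumC F N = fsumC G N.
Proof. induction N; simpl; intros H; [reflexivity|]. rewrite IHN by (intros; apply H; lia). rewrite H by lia. reflexivity. Qed.

Lemma fsumC_one F j N : (forall i, i <> j -> F i = RtoC 0) -> fsumC F N = if (j <? N)%nat then F j else RtoC 0.
Proof. intros H. induction N; simpl; [reflexivity|]. rewrite IHN.
  destruct (Nat.ltb_spec j N); destruct (Nat.ltb_spec j (S N)); try lia.
  - rewrite (H N) by lia. ceq.
  - assert (j = N) by lia. subst. ceq.
  - rewrite (H N) by lia. ceq. Qed.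

Lemma fsumC_zero F N : (forall i, (i < N)%nat -> F i = RtoC 0) -> fsumC F N = RtoC 0.
Proof. induction N; simpl; intros H; [reflexivity|]. rewrite IHN by (intros; apply H; lia). rewrite H by lia. ceq. Qed.

Lemma fsumC_lin F G c N : fsumC (fun i => Cplus (F i) (Cmult c (G i))) N = Cplus (fsumC F N) (Cmult c (fsumC G N)).
Proof. induction N; simpl; [ceq|]. rewrite IHN. ceq. Qed.

Lemma fsumC_const c N : fsumC (fun _ => c) N = Cmult (RtoC (INR N)) c.
Proof. induction N; [ceq|]. rewrite S_INR. simpl fsumC. rewrite IHN. ceq. Qed.

Lemma fsumC_fst F N : fst (fsumC F N) = psum (fun i => fst (F i)) N.
Proof. induction N; simpl; [reflexivity|]. rewrite IHN. reflexivity. Qed.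
Lemma fsumC_snd F N : snd (fsumC F N) = psum (fun i => snd (F i)) N.
Proof. induction N; simpl; [reflexivity|]. rewrite IHN. reflexivity. Qed.

Definition bsum (n : nat) (y : nat -> C) (k : nat) : C := fsumC (fun i => y (n * k + i)%nat) n.

Lemma divmod_blk n k i : (i < n)%nat -> ((n * k + i) / n = k /\ (n * k + i) mod n = i)%nat.
Proof. intros H. split.
  - symmetry. apply (Nat.div_unique _ _ _ i); lia.
  - symmetry. apply (Nat.mod_unique _ _ k); lia. Qed.

Lemma mod_sub_iff n m a : (a < n)%nat -> (a <= m)%nat -> ((m - a) mod n = 0 <-> a = m mod n)%nat.
Proof. intros Han Ham. pose proof (Nat.div_mod_eq m n) as Hm.
  pose proof (Nat.mod_upper_bound m n ltac:(lia)) as Hr. split; intros H.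
  - pose proof (Nat.div_mod_eq (m - a) n) as Hq. rewrite H in Hq.
    apply (Nat.mod_unique _ _ ((m - a) / n)); lia.
  - rewrite H. replace (m - m mod n)%nat with (m / n * n)%nat by lia. apply Nat.Div0.mod_mul. Qed.

Lemma Wpt_aux n y m : (1 <= n)%nat -> forall len a, (a + len <= n)%nat ->
  fold_right (fun j acc => if Nat.leb j m then Cplus (subst_pow n y (m - j)%nat) acc else acc)
             (RtoC 0) (seq a len)
  = if (Nat.leb a (m mod n) && Nat.ltb (m mod n) (a + len))%bool then y (m / n)%nat else RtoC 0.
Proof.
  intros Hn. induction len; intros a Hal.
  - simpl. destruct (Nat.leb_spec a (m mod n)); destruct (Nat.ltb_spec (m mod n) (a + 0)); simpl; try reflexivity; lia.
  - simpl. rewrite IHlen by lia.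
    pose proof (Nat.Div0.mod_le m n).
    destruct (Nat.eq_dec a (m mod n)) as [Ha|Ha].
    + subst a. rewrite (proj2 (Nat.leb_le _ _)) by lia.
      unfold subst_pow. rewrite (proj2 (mod_sub_iff n m (m mod n) ltac:(lia) ltac:(lia)) eq_refl).
      change (Nat.eqb 0 0) with true. cbv iota.
      assert (E : ((m - m mod n) / n = m / n)%nat).
      { replace (m - m mod n)%nat with (m / n * n)%nat by (pose proof (Nat.div_mod_eq m n); lia). apply Nat.div_mul; lia. }
      rewrite E.
      rewrite (proj2 (Nat.leb_gt (S (m mod n)) (m mod n))) by lia.
      rewrite Nat.leb_refl, (proj2 (Nat.ltb_lt (m mod n) (m mod n + S len))) by lia.
      simpl andb. cbv iota. ceq.
    + assert (Hb : (Nat.leb a (m mod n) && Nat.ltb (m mod n) (a + S len))%bool =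
                   (Nat.leb (S a) (m mod n) && Nat.ltb (m mod n) (S a + len))%bool).
      { destruct (Nat.leb_spec a (m mod n)); destruct (Nat.ltb_spec (m mod n) (a + S len));
        destruct (Nat.leb_spec (S a) (m mod n)); destruct (Nat.ltb_spec (m mod n) (S a + len)); simpl; try reflexivity; lia. }
      rewrite Hb. destruct (Nat.leb_spec a m); [|reflexivity].
      unfold subst_pow at 1.
      destruct (Nat.eqb_spec ((m - a) mod n) 0) as [Hz|Hz].
      * exfalso. apply Ha. apply (mod_sub_iff n m a); lia.
      * destruct (_ && _)%bool; ceq.
Qed.

Lemma Wpt n y m : (1 <= n)%nat -> W n y m = y (m / n)%nat.
Proof. intros Hn. unfold W, mul_geom. rewrite (Wpt_aux n y m Hn n 0) by lia.
  pose proof (Nat.mod_upper_bound m n ltac:(lia)).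
  destruct (Nat.leb_spec 0 (m mod n)); destruct (Nat.ltb_spec (m mod n) (0 + n)); simpl; try reflexivity; lia. Qed.

Lemma fsumC_scal c F N : fsumC (fun i => Cmult c (F i)) N = Cmult c (fsumC F N).
Proof. induction N; simpl; [ceq|]. rewrite IHN. ceq. Qed.
Lemma fsumC_add F G N : fsumC (fun i => Cplus (F i) (G i)) N = Cplus (fsumC F N) (fsumC G N).
Proof. induction N; simpl; [ceq|]. rewrite IHN. ceq. Qed.

Definition e (j : nat) : nat -> C := fun m => if Nat.eqb m j then RtoC 1 else RtoC 0.

Lemma sq_sub_le x y : Cmod (Cminus x y) ^ 2 <= 2 * Cmod x ^ 2 + 2 * Cmod y ^ 2.
Proof. unfold Cminus. pose proof (sq_add_le x (Copp y)). rewrite Cmod_opp in H. exact H. Qed.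

Lemma sq_scal c x : Cmod (Cmult c x) ^ 2 = Cmod c ^ 2 * Cmod x ^ 2.
Proof. rewrite Cmod_mult. ring. Qed.

Lemma H2_zero : H2 (fun _ => RtoC 0).
Proof. apply (nb _ 0). intros M. rewrite (psum_ext _ (fun _ => 0)). rewrite psum_const. lra.
  intros i _. unfold sq. rewrite Cmod_0. ring. Qed.

Lemma norm2_zero_le a : (forall k, a k = RtoC 0) -> norm2 a <= 0.
Proof. intros H. apply (nb a 0). intros M. rewrite (psum_ext _ (fun _ => 0)). rewrite psum_const. lra.
  intros i _. unfold sq. rewrite H, Cmod_0. ring. Qed.

Lemma H2_e j : H2 (e j).
Proof. apply (nb _ 1). intros M. rewrite (psum_one _ j).
  - unfold sq, e. rewrite Nat.eqb_refl, Cmod_1. destruct (j <? M)%nat; lra.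
  - intros i Hi. unfold sq, e. destruct (Nat.eqb_spec i j); [lia|]. rewrite Cmod_0. ring. Qed.

Lemma H2_add a b : H2 a -> H2 b -> H2 (fun k => Cplus (a k) (b k)).
Proof. intros Ha Hb. apply (cmp2 a b _ 2 2 Ha Hb); try lra. intros k. apply sq_add_le. Qed.

Lemma H2_sub a b : H2 a -> H2 b -> H2 (fun k => Cminus (a k) (b k)).
Proof. intros Ha Hb. apply (cmp2 a b _ 2 2 Ha Hb); try lra. intros k. apply sq_sub_le. Qed.

Lemma H2_scal c a : H2 a -> H2 (fun k => Cmult c (a k)).
Proof. intros Ha. apply (cmp2 a a _ (Cmod c ^ 2) 0 Ha Ha); try lra. apply pow2_ge_0.
  intros k. unfold sq. rewrite sq_scal. lra. Qed.

Lemma H2_ext a b : (forall k, a k = b k) -> H2 a -> H2 b.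
Proof. intros H Ha. replace b with a by (apply functional_extensionality; auto). exact Ha. Qed.

Lemma H2_lincomb l : (forall p, In p l -> H2 (snd p)) -> H2 (lincomb l).
Proof. induction l as [|p l IH]; intros H.
  - apply H2_zero.
  - apply (H2_ext (fun k => Cplus (Cmult (fst p) (snd p k)) (lincomb l k))).
    intros k. reflexivity.
    apply H2_add. apply H2_scal. apply H. left; auto. apply IH. intros; apply H; right; auto. Qed.

Lemma lincomb_app l1 l2 k : lincomb (l1 ++ l2) k = Cplus (lincomb l1 k) (lincomb l2 k).
Proof. induction l1; simpl. ceq. unfold lincomb in *. simpl. rewrite IHl1. ceq. Qed.

Lemma lincomb_scal c l k : lincomb (map (fun p => (Cmult c (fst p), snd p)) l) k = Cmult c (lincomb l k).
Proof. induction l; simpl. ceq. unfold lincomb in *. simpl. rewrite IHl. ceq. Qed.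

Lemma P_block_sq n y M : (2 <= n)%nat -> psum (sq (subst_pow n y)) M <= psum (sq y) M.
Proof. intros hn.
  eapply Rle_trans. apply (psum_mono _ M (n * M)). apply sq_nonneg. nia.
  rewrite psum_block. right. apply psum_ext. intros k _.
  rewrite (psum_ext _ (fun i => if Nat.eqb i 0 then sq y k else 0)).
  rewrite (psum_one _ 0). rewrite Nat.eqb_refl. destruct (Nat.ltb_spec 0 n); [reflexivity|lia].
  intros i Hi. destruct (Nat.eqb_spec i 0); [lia|reflexivity].
  intros i Hi. destruct (divmod_blk n k i Hi) as [Hd Hm]. unfold sq, subst_pow. rewrite Hm, Hd.
  destruct (Nat.eqb_spec i 0); [reflexivity|]. rewrite Cmod_0. ring. Qed.

Lemma W_block_sq n y M : (2 <= n)%nat -> psum (sq (W n y)) M <= INR n * psum (sq y) M.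
Proof. intros hn.
  eapply Rle_trans. apply (psum_mono _ M (n * M)). apply sq_nonneg. nia.
  rewrite psum_block. right. rewrite <- psum_scal.
  apply psum_ext. intros k _.
  rewrite (psum_ext _ (fun _ => sq y k)). rewrite psum_const. ring.
  intros i Hi. destruct (divmod_blk n k i Hi) as [Hd Hm]. unfold sq. rewrite Wpt by lia. rewrite Hd. reflexivity. Qed.

Lemma H2_P n y : (2 <= n)%nat -> H2 y -> H2 (subst_pow n y) /\ norm2 (subst_pow n y) <= norm2 y.
Proof. intros hn Hy. apply nb. intros M. eapply Rle_trans. apply P_block_sq; auto. apply ps_le; auto. Qed.

Lemma H2_W n y : (2 <= n)%nat -> H2 y -> H2 (W n y) /\ norm2 (W n y) <= INR n * norm2 y.
Proof. intros hn Hy. apply nb. intros M. eapply Rle_trans. apply W_block_sq; auto.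
  apply Rmult_le_compat_l. apply pos_INR. apply ps_le; auto. Qed.

Lemma bsum_P n y k : (2 <= n)%nat -> bsum n (subst_pow n y) k = y k.
Proof. intros hn. unfold bsum.
  rewrite (fsumC_ext _ (fun i => if Nat.eqb i 0 then y k else RtoC 0)).
  rewrite (fsumC_one _ 0). rewrite Nat.eqb_refl. destruct (Nat.ltb_spec 0 n); [reflexivity|lia].
  intros i Hi. destruct (Nat.eqb_spec i 0); [lia|reflexivity].
  intros i Hi. destruct (divmod_blk n k i Hi) as [Hd Hm]. unfold subst_pow. rewrite Hm, Hd. reflexivity. Qed.

Lemma bsum_W n y k : (2 <= n)%nat -> bsum n (W n y) k = Cmult (RtoC (INR n)) (y k).
Proof. intros hn. unfold bsum. rewrite (fsumC_ext _ (fun _ => y k)). apply fsumC_const.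
  intros i Hi. destruct (divmod_blk n k i Hi) as [Hd Hm]. rewrite Wpt by lia. rewrite Hd. reflexivity. Qed.

Lemma bsum_lin n a b c k : bsum n (fun m => Cplus (a m) (Cmult c (b m))) k = Cplus (bsum n a k) (Cmult c (bsum n b k)).
Proof. unfold bsum. apply fsumC_lin. Qed.

Lemma bsum_ext n a b k : (forall m, a m = b m) -> bsum n a k = bsum n b k.
Proof. intros H. unfold bsum. apply fsumC_ext. intros; apply H. Qed.

Lemma bsum_e n j k : (2 <= n)%nat -> bsum n (e j) k = if Nat.eqb k (j / n) then RtoC 1 else RtoC 0.
Proof. intros hn. unfold bsum, e.
  pose proof (Nat.div_mod_eq j n). pose proof (Nat.mod_upper_bound j n ltac:(lia)).
  destruct (Nat.eqb_spec k (j / n)) as [Hk|Hk].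
  - rewrite (fsumC_one _ (j mod n)). destruct (Nat.ltb_spec (j mod n) n); [|lia].
    rewrite (proj2 (Nat.eqb_eq _ _)) by lia. reflexivity.
    intros i Hi. destruct (Nat.eqb_spec (n * k + i) j); [lia|reflexivity].
  - apply fsumC_zero. intros i Hi. destruct (Nat.eqb_spec (n * k + i) j); [|reflexivity].
    exfalso. apply Hk. destruct (divmod_blk n k i Hi). subst j. auto. Qed.

Definition good (n : nat) (g : nat -> C) : Prop :=
  H2 g /\ exists r, 0 < r < 1 /\ forall k, bsum n g k = Cmult (RtoC r) (g k).

Definition Approx (n : nat) (x : nat -> C) : Prop :=
  H2 x /\ forall eps, 0 < eps -> exists l : list (C * (nat -> C)),
    (forall p, In p l -> good n (snd p)) /\ norm2 (fun k => Cminus (x k) (lincomb l k)) < eps.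

Lemma tri_norm a b c : H2 a -> H2 b -> (forall k, c k = Cplus (a k) (b k)) ->
  H2 c /\ norm2 c <= 2 * norm2 a + 2 * norm2 b.
Proof. intros Ha Hb H. apply (cmp2 a b c 2 2 Ha Hb); try lra. intros k. unfold sq. rewrite H. apply sq_add_le. Qed.

Lemma good_lincomb n l : (forall p, In p l -> good n (snd p)) -> H2 (lincomb l).
Proof. intros H. apply H2_lincomb. intros p Hp. apply H; auto. Qed.

Lemma Approx_ext n x y : (forall k, x k = y k) -> Approx n x -> Approx n y.
Proof. intros H Ha. replace y with x by (apply functional_extensionality; auto). exact Ha. Qed.

Lemma Approx_good n g : good n g -> Approx n g.
Proof. intros Hg. split. apply Hg. intros eps Heps. exists ((RtoC 1, g) :: nil). split.
  - intros p [<-|[]]. exact Hg.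
  - eapply Rle_lt_trans; [|exact Heps]. apply norm2_zero_le. intros k. unfold lincomb. simpl. ceq. Qed.

Lemma Approx_zero n : Approx n (fun _ => RtoC 0).
Proof. split. apply H2_zero. intros eps Heps. exists nil. split. intros p [].
  eapply Rle_lt_trans; [|exact Heps]. apply norm2_zero_le. intros k. unfold lincomb. simpl. ceq. Qed.

Lemma Approx_add n x y : Approx n x -> Approx n y -> Approx n (fun k => Cplus (x k) (y k)).
Proof. intros [Hx Ax] [Hy Ay]. split. apply H2_add; auto. intros eps Heps.
  destruct (Ax (eps / 4)) as [l1 [G1 N1]]; [lra|].
  destruct (Ay (eps / 4)) as [l2 [G2 N2]]; [lra|].
  exists (l1 ++ l2). split.
  - intros p Hp. apply in_app_or in Hp. destruct Hp; auto.
  - destruct (tri_norm (fun k => Cminus (x k) (lincomb l1 k)) (fun k => Cminus (y k) (lincomb l2 k))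
       (fun k => Cminus (Cplus (x k) (y k)) (lincomb (l1 ++ l2) k))) as [_ Hn].
    apply H2_sub; auto. apply (good_lincomb n); auto.
    apply H2_sub; auto. apply (good_lincomb n); auto.
    intros k. rewrite lincomb_app. unfold Cminus. ceq.
    lra. Qed.

Lemma Approx_scal n c x : Approx n x -> Approx n (fun k => Cmult c (x k)).
Proof. intros [Hx Ax]. split. apply H2_scal; auto. intros eps Heps.
  pose proof (pow2_ge_0 (Cmod c)) as Hc.
  destruct (Ax (eps / (Cmod c ^ 2 + 1))) as [l [G N]]. apply Rdiv_lt_0_compat; lra.
  exists (map (fun p => (Cmult c (fst p), snd p)) l). split.
  - intros p Hp. apply in_map_iff in Hp. destruct Hp as [q [<- Hq]]. simpl. apply G; auto.
  - assert (HL : H2 (lincomb l)) by (apply (good_lincomb n); auto).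
    destruct (cmp2 (fun k => Cminus (x k) (lincomb l k)) (fun k => Cminus (x k) (lincomb l k))
       (fun k => Cminus (Cmult c (x k)) (lincomb (map (fun p => (Cmult c (fst p), snd p)) l) k))
       (Cmod c ^ 2) 0) as [_ Hn]; try lra.
    apply H2_sub; auto. apply H2_sub; auto.
    intros k. unfold sq. rewrite lincomb_scal.
    replace (Cminus (Cmult c (x k)) (Cmult c (lincomb l k))) with (Cmult c (Cminus (x k) (lincomb l k))) by (unfold Cminus; ceq).
    rewrite sq_scal. lra.
    eapply Rle_lt_trans. exact Hn.
    assert (Cmod c ^ 2 * norm2 (fun k => Cminus (x k) (lincomb l k)) <= Cmod c ^ 2 * (eps / (Cmod c ^ 2 + 1))).
    { apply Rmult_le_compat_l; lra. }
    assert (Cmod c ^ 2 * (eps / (Cmod c ^ 2 + 1)) < eps).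
    { apply (Rmult_lt_reg_r (Cmod c ^ 2 + 1)). lra. field_simplify; lra. }
    lra. Qed.

Lemma Approx_lim n x : H2 x ->
  (forall eps, 0 < eps -> exists y, Approx n y /\ norm2 (fun k => Cminus (x k) (y k)) < eps) -> Approx n x.
Proof. intros Hx H. split; auto. intros eps Heps.
  destruct (H (eps / 4)) as [y [[Hy Ay] Ny]]; [lra|].
  destruct (Ay (eps / 4)) as [l [G N]]; [lra|].
  exists l. split; auto.
  destruct (tri_norm (fun k => Cminus (x k) (y k)) (fun k => Cminus (y k) (lincomb l k))
       (fun k => Cminus (x k) (lincomb l k))) as [_ Hn].
  apply H2_sub; auto. apply H2_sub; auto. apply (good_lincomb n); auto.
  intros k. unfold Cminus. ceq. lra. Qed.

Lemma Approx_sum n x y c : Approx n x -> Approx n y -> Approx n (fun k => Cplus (x k) (Cmult c (y k))).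
Proof. intros. apply Approx_add; auto. apply Approx_scal; auto. Qed.

Fixpoint Gf (n : nat) (r : R) (s : nat -> C) (fuel m : nat) : C :=
  match fuel with
  | O => RtoC 0
  | S fu => if Nat.eqb m 0 then Cmult (s 0%nat) (RtoC (/ (1 - r)))
            else Cplus (s m) (if Nat.eqb (m mod n) 0 then Cmult (RtoC r) (Gf n r s fu (m / n)) else RtoC 0)
  end.
Definition G n r s m := Gf n r s (S m) m.

Lemma Gf_stable n r s : (2 <= n)%nat -> forall f1 f2 m, (m < f1)%nat -> (m < f2)%nat -> Gf n r s f1 m = Gf n r s f2 m.
Proof. intros hn. induction f1; intros f2 m H1 H2; [lia|]. destruct f2; [lia|]. simpl.
  destruct (Nat.eqb_spec m 0); [reflexivity|].
  pose proof (Nat.div_lt m n ltac:(lia) ltac:(lia)).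
  rewrite (IHf1 f2) by lia. reflexivity. Qed.

Lemma Gf_S n r s fu m : Gf n r s (S fu) m = if Nat.eqb m 0 then Cmult (s 0%nat) (RtoC (/ (1 - r)))
            else Cplus (s m) (if Nat.eqb (m mod n) 0 then Cmult (RtoC r) (Gf n r s fu (m / n)) else RtoC 0).
Proof. reflexivity. Qed.

Lemma G_eq n r s m : (2 <= n)%nat -> r <> 1 ->
  G n r s m = Cplus (s m) (Cmult (RtoC r) (subst_pow n (G n r s) m)).
Proof. intros hn hr. destruct m as [|m].
  - unfold subst_pow. rewrite Nat.Div0.mod_0_l, Nat.Div0.div_0_l. simpl Nat.eqb. cbv iota.
    unfold G. simpl. ceq; field; lra.
  - unfold G at 1. rewrite Gf_S. change (Nat.eqb (S m) 0) with false. cbv iota.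
    unfold subst_pow. destruct (Nat.eqb (S m mod n) 0); [|ceq].
    pose proof (Nat.div_lt (S m) n ltac:(lia) ltac:(lia)).
    unfold G. rewrite (Gf_stable n r s hn (S m) (S (S m / n))) by lia. reflexivity. Qed.

Lemma bsum_G n r s k : (2 <= n)%nat -> r <> 1 -> (forall j, bsum n s j = RtoC 0) ->
  bsum n (G n r s) k = Cmult (RtoC r) (G n r s k).
Proof. intros hn hr Hs. rewrite (bsum_ext n _ _ k (fun m => G_eq n r s m hn hr)).
  rewrite bsum_lin, Hs, bsum_P by auto. ceq. Qed.

Lemma Cmod_r2 r : Cmod (RtoC r) ^ 2 = r ^ 2.
Proof. rewrite Cmod_R. rewrite <- Rsqr_pow2, <- Rsqr_abs. apply Rsqr_pow2. Qed.

Lemma kernel_approx n u : (2 <= n)%nat -> H2 u -> (forall k, bsum n u k = RtoC 0) -> Approx n u.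
Proof. intros hn Hu Hk. apply Approx_lim; auto. intros eps Heps.
  set (N := norm2 u). assert (HN : 0 <= N) by (apply norm2_nonneg; auto).
  set (r := Rmin (1/2) (eps / (4 * (N + 1)))).
  assert (Hr0 : 0 < r). { apply Rmin_glb_lt. lra. apply Rdiv_lt_0_compat; lra. }
  assert (Hr1 : r <= 1/2) by apply Rmin_l.
  assert (Hr2 : r <= eps / (4 * (N + 1))) by apply Rmin_r.
  set (g := G n r u).
  set (x := fun m => Cminus (g m) (u m)).
  assert (Hx : forall m, x m = Cplus (Cmult (RtoC r) (subst_pow n u m)) (Cmult (RtoC r) (subst_pow n x m))).
  { intros m. unfold x. unfold g at 1. rewrite (G_eq n r u m hn) by lra. fold g. unfold subst_pow.
    destruct (Nat.eqb (m mod n) 0); unfold Cminus; ceq. }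
  assert (HS : forall M, psum (sq x) M <= 4 * r ^ 2 * N).
  { intros M.
    assert (H1 : psum (sq x) M <= 2 * r ^ 2 * psum (sq (subst_pow n u)) M + 2 * r ^ 2 * psum (sq (subst_pow n x)) M).
    { rewrite <- psum_lin. apply psum_le. intros i _. unfold sq at 1. rewrite Hx.
      eapply Rle_trans. apply sq_add_le. rewrite !sq_scal, !Cmod_r2. unfold sq. lra. }
    pose proof (P_block_sq n u M hn). pose proof (P_block_sq n x M hn).
    pose proof (ps_le u M Hu). fold N in H2.
    pose proof (psum_nonneg (sq x) M (sq_nonneg x)).
    assert (Hr : r ^ 2 <= 1/4) by nra.
    assert (2 * r ^ 2 * psum (sq (subst_pow n u)) M <= 2 * r ^ 2 * N) by (apply Rmult_le_compat_l; nra).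
    assert (2 * r ^ 2 * psum (sq (subst_pow n x)) M <= 2 * r ^ 2 * psum (sq x) M) by (apply Rmult_le_compat_l; nra).
    nra. }
  destruct (nb x _ HS) as [Hx2 Nx].
  assert (Hg2 : H2 g).
  { apply (H2_ext (fun m => Cplus (u m) (x m))). intros m. unfold x, Cminus. ceq. apply H2_add; auto. }
  exists g. split.
  - apply Approx_good. split; auto. exists r. split. lra. intros k. apply bsum_G; auto. lra.
  - destruct (cmp2 x x (fun k => Cminus (u k) (g k)) 1 0 Hx2 Hx2) as [_ Hn]; try lra.
    intros k. unfold sq, x. replace (Cminus (u k) (g k)) with (Copp (Cminus (g k) (u k))) by (unfold Cminus; ceq).
    rewrite Cmod_opp. lra.
    assert (4 * r ^ 2 * N < eps).
    { assert (r * N <= eps / (4 * (N + 1)) * N) by (apply Rmult_le_compat_r; lra).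
      assert (eps / (4 * (N + 1)) * N < eps / 2).
      { unfold Rdiv. apply (Rmult_lt_reg_r (4 * (N + 1))). lra. field_simplify; nra. }
      nra. }
    lra. Qed.

Lemma bsum_scal n c a k : bsum n (fun m => Cmult c (a m)) k = Cmult c (bsum n a k).
Proof. unfold bsum. apply fsumC_scal. Qed.
Lemma bsum_add n a b k : bsum n (fun m => Cplus (a m) (b m)) k = Cplus (bsum n a k) (bsum n b k).
Proof. unfold bsum. apply fsumC_add. Qed.

Lemma e0_approx n : (2 <= n)%nat -> Approx n (e 0).
Proof. intros hn. apply Approx_lim. apply H2_e. intros eps Heps.
  set (r := Rmax (1/2) (1 - eps / 2)).
  assert (Hr0 : 1/2 <= r) by apply Rmax_l.
  assert (Hr1 : 1 - eps / 2 <= r) by apply Rmax_r.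
  assert (Hr2 : r < 1). { unfold r. apply Rmax_lub_lt; lra. }
  set (c := RtoC (1 - r)).
  set (s := fun m => Cplus (Cmult c (e 0 m)) (Cmult (Copp c) (e 1 m))).
  assert (Hs : forall j, bsum n s j = RtoC 0).
  { intros j. unfold s. rewrite bsum_add, !bsum_scal, !bsum_e by auto.
    rewrite Nat.Div0.div_0_l, (Nat.div_small 1 n) by lia. destruct (Nat.eqb j 0); ceq. }
  set (h := G n r s).
  set (x := fun m => Cminus (h m) (e 0 m)).
  assert (Hx : forall m, sq x m <= (if Nat.eqb m 1 then (1 - r) ^ 2 else 0) + r ^ 2 * sq (subst_pow n x) m).
  { intros m. pose proof (pow2_ge_0 r). pose proof (sq_nonneg (subst_pow n x) m).
    destruct m as [|m].
    - assert (x 0%nat = RtoC 0).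
      { unfold x, h, G. simpl Gf. unfold s, e, c. simpl. ceq. field. lra. }
      unfold sq at 1. rewrite H1, Cmod_0. simpl Nat.eqb. cbv iota. pose proof (Rmult_le_pos _ _ H H0). replace (0 ^ 2) with 0 by ring. lra.
    - assert (Hh : h (S m) = Cplus (s (S m)) (Cmult (RtoC r) (subst_pow n h (S m)))).
      { unfold h. apply G_eq; auto; lra. }
      destruct m as [|m].
      + simpl Nat.eqb. cbv iota.
        assert (x 1%nat = Copp c).
        { unfold x. rewrite Hh. unfold subst_pow. rewrite Nat.mod_small by lia. simpl Nat.eqb. cbv iota.
          unfold s, e. simpl. ceq. }
        unfold sq at 1. rewrite H1, Cmod_opp. unfold c. rewrite Cmod_r2. pose proof (Rmult_le_pos _ _ H H0). lra.
      + simpl Nat.eqb. cbv iota.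
        assert (x (S (S m)) = Cmult (RtoC r) (subst_pow n x (S (S m)))).
        { unfold x. rewrite Hh. unfold subst_pow.
          destruct (Nat.eqb_spec (S (S m) mod n) 0) as [Hz|Hz].
          - assert (Hq : (S (S m) / n <> 0)%nat).
            { intro Hq. pose proof (Nat.div_mod_eq (S (S m)) n). rewrite Hq, Hz in H1. lia. }
            unfold e. destruct (Nat.eqb_spec (S (S m) / n) 0); [lia|]. unfold s, e. simpl. ceq.
          - unfold s, e. simpl. ceq. }
        unfold sq at 1. rewrite H1, sq_scal, Cmod_r2. unfold sq. lra. }
  assert (HS : forall M, psum (sq x) M <= 1 - r).
  { intros M.
    assert (H1 : psum (sq x) M <= psum (fun m => if Nat.eqb m 1 then (1 - r) ^ 2 else 0) M + r ^ 2 * psum (sq (subst_pow n x)) M).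
    { rewrite <- (Rmult_1_l (psum (fun m : nat => if Nat.eqb m 1 then (1 - r) ^ 2 else 0) M)).
      rewrite <- psum_lin. apply psum_le. intros i _. specialize (Hx i). lra. }
    rewrite (psum_one (fun m : nat => if Nat.eqb m 1 then (1 - r) ^ 2 else 0) 1) in H1.
    2:{ intros i Hi. destruct (Nat.eqb_spec i 1); [lia|reflexivity]. }
    pose proof (P_block_sq n x M hn).
    pose proof (psum_nonneg (sq x) M (sq_nonneg x)).
    assert (H3 : psum (sq x) M <= (1 - r) ^ 2 + r ^ 2 * psum (sq x) M).
    { assert (r ^ 2 * psum (sq (subst_pow n x)) M <= r ^ 2 * psum (sq x) M) by (apply Rmult_le_compat_l; nra).
      rewrite Nat.eqb_refl in H1. destruct (1 <? M)%nat; nra. }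
    destruct (Rle_dec (psum (sq x) M) (1 - r)) as [ok|ko]; [exact ok|exfalso].
    assert (psum (sq x) M * (1 - r ^ 2) > (1 - r) * (1 - r ^ 2)).
    { apply Rmult_gt_compat_r; nra. }
    assert (HH : (1 - r) * (1 - r ^ 2) - (1 - r) ^ 2 >= 0).
    { replace ((1 - r) * (1 - r ^ 2) - (1 - r) ^ 2) with ((1 - r) ^ 2 * r) by ring.
      apply Rle_ge. apply Rmult_le_pos. apply pow2_ge_0. lra. }
    lra. }
  destruct (nb x _ HS) as [Hx2 Nx].
  assert (Hh2 : H2 h).
  { apply (H2_ext (fun m => Cplus (x m) (e 0 m))). intros m. unfold x, Cminus. ceq. apply H2_add; auto. apply H2_e. }
  exists h. split.
  - apply Approx_good. split; auto. exists r. split. lra. intros k. apply bsum_G; auto. lra.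
  - destruct (cmp2 x x (fun k => Cminus (e 0 k) (h k)) 1 0 Hx2 Hx2) as [_ Hn]; try lra.
    intros k. unfold sq, x. replace (Cminus (e 0 k) (h k)) with (Copp (Cminus (h k) (e 0 k))) by (unfold Cminus; ceq).
    rewrite Cmod_opp. lra.
    Qed.

Lemma W_good n g : (2 <= n)%nat -> good n g -> Approx n (W n g).
Proof. intros hn [Hg [r [Hr Hb]]].
  assert (HnR : 0 < INR n) by (apply lt_0_INR; lia).
  set (v := fun m => Cplus (W n g m) (Cmult (RtoC (- (INR n / r))) (g m))).
  assert (Hv : Approx n v).
  { apply kernel_approx; auto. unfold v. apply H2_add. apply H2_W; auto. apply H2_scal; auto.
    intros k. unfold v. rewrite bsum_lin, bsum_W, Hb by auto. ceq; field; lra. }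
  apply (Approx_ext n (fun m => Cplus (v m) (Cmult (RtoC (INR n / r)) (g m)))).
  intros m. unfold v. ceq.
  apply Approx_sum; auto. apply Approx_good. split; auto. exists r. auto. Qed.

Lemma W_lincomb_approx n l : (2 <= n)%nat -> (forall p, In p l -> good n (snd p)) -> Approx n (W n (lincomb l)).
Proof. intros hn. induction l as [|p l IH]; intros H.
  - apply (Approx_ext n (fun _ => RtoC 0)). intros k. rewrite Wpt by lia. reflexivity. apply Approx_zero.
  - apply (Approx_ext n (fun k => Cplus (W n (lincomb l) k) (Cmult (fst p) (W n (snd p) k)))).
    intros k. rewrite !Wpt by lia. unfold lincomb. simpl. ceq.
    apply Approx_sum. apply IH. intros; apply H; right; auto. apply W_good; auto. apply H; left; auto. Qed.

Lemma W_Approx n x : (2 <= n)%nat -> Approx n x -> Approx n (W n x).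
Proof. intros hn [Hx Ax]. apply Approx_lim. apply H2_W; auto. intros eps Heps.
  assert (HnR : 0 < INR n) by (apply lt_0_INR; lia).
  destruct (Ax (eps / (INR n + 1))) as [l [Gl Nl]]. apply Rdiv_lt_0_compat; lra.
  exists (W n (lincomb l)). split. apply W_lincomb_approx; auto.
  replace (fun k => Cminus (W n x k) (W n (lincomb l) k)) with (W n (fun k => Cminus (x k) (lincomb l k))).
  2:{ apply functional_extensionality. intros k. rewrite !Wpt by lia. reflexivity. }
  destruct (H2_W n (fun k => Cminus (x k) (lincomb l k)) hn) as [_ Hn].
  apply H2_sub; auto. apply (good_lincomb n); auto.
  eapply Rle_lt_trans. exact Hn.
  assert (INR n * norm2 (fun k => Cminus (x k) (lincomb l k)) <= INR n * (eps / (INR n + 1))).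
  { apply Rmult_le_compat_l; lra. }
  assert (INR n * (eps / (INR n + 1)) < eps).
  { apply (Rmult_lt_reg_r (INR n + 1)). lra. field_simplify; lra. }
  lra. Qed.

Lemma e_approx n m : (2 <= n)%nat -> Approx n (e m).
Proof. intros hn. induction m as [m IH] using (well_founded_induction Wf_nat.lt_wf).
  destruct m as [|m']. apply e0_approx; auto.
  set (m := S m'). set (k := (m / n)%nat).
  assert (Hk : (k < m)%nat) by (apply Nat.div_lt; lia).
  assert (HnR : 0 < INR n) by (apply lt_0_INR; lia).
  set (v := fun j => Cplus (e m j) (Cmult (RtoC (- / INR n)) (W n (e k) j))).
  assert (Hv : Approx n v).
  { apply kernel_approx; auto. unfold v. apply H2_add. apply H2_e. apply H2_scal. apply H2_W; auto. apply H2_e.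
    intros j. unfold v. rewrite bsum_lin, bsum_W, !bsum_e by auto. fold k.
    unfold e. destruct (Nat.eqb j k); ceq; field; lra. }
  apply (Approx_ext n (fun j => Cplus (v j) (Cmult (RtoC (/ INR n)) (W n (e k) j)))).
  intros j. unfold v. ceq.
  apply Approx_sum; auto. apply W_Approx; auto. Qed.

Definition trunc (f : nat -> C) (N : nat) : nat -> C := fun m => if (m <? N)%nat then f m else RtoC 0.

Lemma trunc_approx n f N : (2 <= n)%nat -> Approx n (trunc f N).
Proof. intros hn. induction N.
  - apply (Approx_ext n (fun _ => RtoC 0)). intros k. reflexivity. apply Approx_zero.
  - apply (Approx_ext n (fun m => Cplus (trunc f N m) (Cmult (f N) (e N m)))).
    + intros m. unfold trunc, e. destruct (Nat.ltb_spec m N); destruct (Nat.ltb_spec m (S N));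
      destruct (Nat.eqb_spec m N); try lia; subst; ceq.
    + apply Approx_sum; auto. apply e_approx; auto. Qed.

Lemma tail_small f : H2 f -> forall eps, 0 < eps -> exists N,
  norm2 (fun k => Cminus (f k) (trunc f N k)) < eps.
Proof. intros Hf eps Heps.
  pose proof (Series_correct _ Hf) as Hs. apply is_series_Reals in Hs.
  destruct (Hs (eps / 2)) as [N0 HN0]; [lra|].
  specialize (HN0 N0 (le_n _)). unfold R_dist in HN0. apply Rabs_def2 in HN0.
  fold (norm2 f) in HN0. rewrite <- psum_sf in HN0. change (fun k => Cmod (f k) ^ 2) with (sq f) in HN0.
  exists (S N0). set (N := S N0) in *.
  assert (Hd : forall m, sq (fun k => Cminus (f k) (trunc f N k)) m = if (m <? N)%nat then 0 else sq f m).
  { intros m. unfold sq, trunc. destruct (m <? N)%nat.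
    - replace (Cminus (f m) (f m)) with (RtoC 0) by (unfold Cminus; ceq). rewrite Cmod_0. ring.
    - replace (Cminus (f m) (RtoC 0)) with (f m) by (unfold Cminus; ceq). reflexivity. }
  assert (HB : forall M, psum (sq (fun k => Cminus (f k) (trunc f N k))) M <= norm2 f - psum (sq f) N).
  { intros M. destruct (Nat.le_gt_cases M N).
    - rewrite (psum_ext _ (fun _ => 0)). rewrite psum_const. pose proof (ps_le f N Hf). lra.
      intros i Hi. rewrite Hd. destruct (Nat.ltb_spec i N); [reflexivity|lia].
    - replace M with (N + (M - N))%nat by lia. rewrite !psum_split.
      rewrite (psum_ext _ (fun _ => 0)). rewrite psum_const.
      rewrite (psum_ext (fun i => sq _ (N + i)%nat) (fun i => sq f (N + i)%nat)).
      pose proof (ps_le f (N + (M - N)) Hf). rewrite psum_split in H0. lra.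
      intros i _. rewrite Hd. destruct (Nat.ltb_spec (N + i) N); [lia|reflexivity].
      intros i Hi. rewrite Hd. destruct (Nat.ltb_spec i N); [reflexivity|lia]. }
  destruct (nb _ _ HB) as [_ Hn]. lra. Qed.

Lemma all_approx n f : (2 <= n)%nat -> H2 f -> Approx n f.
Proof. intros hn Hf. apply Approx_lim; auto. intros eps Heps.
  destruct (tail_small f Hf eps Heps) as [N HN]. exists (trunc f N). split; auto. apply trunc_approx; auto. Qed.

Lemma group_series n a : (1 <= n)%nat -> ex_series a ->
  is_series (fun k => psum (fun i => a (n * k + i)%nat) n) (Series a).
Proof. intros hn Ha. pose proof (Series_correct _ Ha) as Hs. apply is_series_Reals in Hs.
  apply is_series_Reals. intros eps Heps. destruct (Hs eps Heps) as [N0 HN0].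
  exists N0. intros K HK. rewrite <- psum_sf. rewrite <- psum_block.
  replace (n * S K)%nat with (S (n * S K - 1)) by nia. rewrite psum_sf. apply HN0. nia. Qed.

Lemma abs_prod_le x1 x2 y1 y2 : Rabs (x1 * y1 + x2 * y2) <= (x1 ^ 2 + x2 ^ 2) + (y1 ^ 2 + y2 ^ 2).
Proof. pose proof (pow2_ge_0 (x1 - y1)). pose proof (pow2_ge_0 (x1 + y1)). pose proof (pow2_ge_0 (x2 - y2)). pose proof (pow2_ge_0 (x2 + y2)). pose proof (pow2_ge_0 x1). pose proof (pow2_ge_0 x2). pose proof (pow2_ge_0 y1). pose proof (pow2_ge_0 y2). apply Rabs_le. simpl in *. split; lra. Qed.

Lemma good_ker n g : (2 <= n)%nat -> good n g -> exists r, 0 < r < 1 /\ in_ker_adj_sub n (RtoC r) g.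
Proof. intros hn [Hg [r [Hr Hb]]]. exists r. split; auto. split; auto. intros f Hf.
  destruct (H2_W n f hn Hf) as [HW _].
  assert (Hex : forall (F : C -> C -> R), (forall z w, Rabs (F z w) <= Cmod z ^ 2 + Cmod w ^ 2) ->
     ex_series (fun m => F (W n f m) (g m))).
  { intros F HF. apply (@ex_series_le R_AbsRing R_CompleteNormedModule _ (fun m => sq (W n f) m + sq g m)).
    intros m. apply HF. apply (ex_series_plus (sq (W n f)) (sq g)); auto. }
  assert (Hgrp : forall (F : C -> C -> R), (forall z w, Rabs (F z w) <= Cmod z ^ 2 + Cmod w ^ 2) ->
     (forall k, psum (fun i => F (W n f (n * k + i)%nat) (g (n * k + i)%nat)) n = F (f k) (Cmult (RtoC r) (g k))) ->
     Series (fun m => F (W n f m) (g m)) = Series (fun k => F (f k) (Cmult (RtoC r) (g k)))).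
  { intros F HF HG. symmetry. apply is_series_unique.
    eapply is_series_ext; [|apply (group_series n _ ltac:(lia) (Hex F HF))]. intros k. apply HG. }
  unfold inner. f_equal.
  - apply (Hgrp (fun z w => Re (Cmult z (Cconj w)))).
    + intros z w. rewrite !Cmod2. destruct z as [z1 z2], w as [w1 w2]. unfold Re; simpl.
      pose proof (abs_prod_le z1 z2 w1 w2). replace (z1 * w1 - z2 * - w2) with (z1 * w1 + z2 * w2) by ring. exact H.
    + intros k. pose proof (Hb k) as Hbk. unfold bsum in Hbk.
      rewrite (psum_ext _ (fun i => fst (f k) * fst (g (n * k + i)%nat) + snd (f k) * snd (g (n * k + i)%nat))).
      rewrite (psum_lin (fun i => fst (g (n * k + i)%nat)) (fun i => snd (g (n * k + i)%nat))).
      rewrite <- fsumC_fst, <- fsumC_snd, Hbk. unfold Re. simpl. ring.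
      intros i Hi. destruct (divmod_blk n k i Hi) as [Hd _]. rewrite Wpt by lia. rewrite Hd. unfold Re. simpl. ring.
  - apply (Hgrp (fun z w => Im (Cmult z (Cconj w)))).
    + intros z w. rewrite !Cmod2. destruct z as [z1 z2], w as [w1 w2]. unfold Im; simpl.
      pose proof (abs_prod_le z2 (- z1) w1 w2). replace (z1 * - w2 + z2 * w1) with (z2 * w1 + - z1 * w2) by ring.
      replace ((- z1) ^ 2) with (z1 ^ 2) in H by ring. lra.
    + intros k. pose proof (Hb k) as Hbk. unfold bsum in Hbk.
      rewrite (psum_ext _ (fun i => snd (f k) * fst (g (n * k + i)%nat) + (- fst (f k)) * snd (g (n * k + i)%nat))).
      rewrite (psum_lin (fun i => fst (g (n * k + i)%nat)) (fun i => snd (g (n * k + i)%nat))).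
      rewrite <- fsumC_fst, <- fsumC_snd, Hbk. unfold Im. simpl. ring.
      intros i Hi. destruct (divmod_blk n k i Hi) as [Hd _]. rewrite Wpt by lia. rewrite Hd. unfold Im. simpl. ring.
Qed.

Theorem mainTheorem5 (n : nat) (hn : (2 <= n)%nat) :
  forall f : nat -> C, H2 f ->
  forall eps : R, 0 < eps ->
  exists l : list (C * (nat -> C)),
    (forall p, In p l -> exists lam : C, Cmod lam < 1 /\ in_ker_adj_sub n lam (snd p)) /\
    norm2 (fun k => Cminus (f k) (lincomb l k)) < eps.
Proof.
  intros f Hf eps Heps. destruct (all_approx n f hn Hf) as [_ A].
  destruct (A eps Heps) as [l [Gl Nl]]. exists l. split; auto.
  intros p Hp. destruct (good_ker n (snd p) hn (Gl p Hp)) as [r [Hr Hk]].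
  exists (RtoC r). split; auto. rewrite Cmod_R, Rabs_pos_eq; lra.
Qed.
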